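(* Let $\mathbf L=(L,\vee,\wedge,0,1)$ be a complemented lattice with $0\neq 1$ and let $a\in L$. Then: (i) $a\in a^{++}$ and $a^{+++}=a^+$; (ii) the poset $(x^+,\le)$ is an antichain for every $x\in L$ if and only if $\mathbf L$ has no sublattice that is isomorphic to the lattice $\mathbf N_5$ and contains $0$ and $1$; (iii) $(a^+,\le)$ is convex, i.e. if $b,c\in a^+$, $d\in L$ and $b\le d\le c$, then $d\in a^+$; (iv) if the mapping $x\mapsto x^{++}$ from $L$ to $2^L$ is not injective, then $\mathbf L$ does not satisfy the identity $x^{++}=\{x\}$ for all $x\in L$.
   Context: A bounded lattice is complemented if every element $a$ has a complement $b$, i.e. $a\vee b=1$ and $a\wedge b=0$; complements need not be unique. For $a\in L$, $a^+:=\{x\in L\mid a\vee x=1,\ a\wedge x=0\}$ is the set of all complements of $a$. For $A\subseteq L$, $A^+:=\{x\in L\mid a\vee x=1\text{ and }a\wedge x=0\text{ for all }a\in A\}$. Thus $a^{++}=(a^+)^+$ and $a^{+++}=((a^+)^+)^+$. A singleton $\{x\}$ is identified with $x$. $\mathbf N_5$ is the five-element non-modular lattice $\{0,a,b,c,1\}$ with $0<a<c<1$ and $b$ incomparable to $a$ and $c$. *)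

(* Defs.v *)
From HB Require Import structures.
From mathcomp Require Import all_boot all_order.
Set Implicit Arguments. Unset Strict Implicit. Unset Printing Implicit Defensive.
Import Order.TTheory.
Local Open Scope order_scope.

Definition cset {d} {T : tbLatticeType d} (A : T -> Prop) : T -> Prop :=
  fun x => forall a, A a -> a `|` x = \top /\ a `&` x = \bot.

Definition sing {T : Type} (a : T) : T -> Prop := fun x => x = a.

Definition cpl {d} {T : tbLatticeType d} (a : T) : T -> Prop := cset (sing a).

Definition seteq {T : Type} (A B : T -> Prop) : Prop := forall x, A x <-> B x.

Definition complemented {d} (T : tbLatticeType d) : Prop :=
  forall a : T, exists b : T, a `|` b = \top /\ a `&` b = \bot.

(* The lattice N5 = {0, a, b, c, 1}, 0 < a < c < 1, b incomparable to a, c *)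
Inductive N5 := N0 | Na | Nb | Nc | N1.

Definition n5_le (x y : N5) : bool :=
  match x, y with
  | N0, _ => true
  | _, N1 => true
  | Na, Na | Na, Nc | Nb, Nb | Nc, Nc => true
  | _, _ => false
  end.

Definition n5_join (x y : N5) : N5 :=
  if n5_le x y then y else if n5_le y x then x else N1.
Definition n5_meet (x y : N5) : N5 :=
  if n5_le x y then x else if n5_le y x then y else N0.

(* L has a sublattice isomorphic to N5 containing 0 and 1:
   an injective lattice homomorphism N5 -> L whose image contains 0 and 1
   (its image is then such a sublattice, and conversely). *)
Definition has_N5_01 {d} (T : tbLatticeType d) : Prop :=
  exists f : N5 -> T,
    injective f /\
    (forall x y, f (n5_join x y) = f x `|` f y) /\
    (forall x y, f (n5_meet x y) = f x `&` f y) /\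
    (exists x, f x = \bot) /\ (exists y, f y = \top).

(* Main.v *)
Require Import Defs.
From HB Require Import structures.
From mathcomp Require Import all_boot all_order.
Import Order.TTheory.
Local Open Scope order_scope.

Lemma n5_hom_le {d} {T : tbLatticeType d} (f : N5 -> T) :
  (forall x y, f (n5_meet x y) = f x `&` f y) -> f Na <= f Nc.
Proof. move=> Hm; apply/meet_idPl; by rewrite -Hm. Qed.

Theorem proposition1 (d : Order.disp_t) (T : tbLatticeType d)
  (Hc : complemented T) (H01 : (\bot : T) <> \top) (a : T) :
  (* (i) *)
  (cset (cpl a) a /\ seteq (cset (cset (cpl a))) (cpl a)) /\
  (* (ii) *)
  ((forall x y z : T, cpl x y -> cpl x z -> y <= z -> y = z) <-> ~ has_N5_01 T) /\
  (* (iii) *)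
  (forall b c e : T, cpl a b -> cpl a c -> b <= e -> e <= c -> cpl a e) /\
  (* (iv) *)
  ((exists x y : T, x <> y /\ seteq (cset (cpl x)) (cset (cpl y))) ->
     ~ (forall x : T, seteq (cset (cpl x)) (sing x))).
Proof.
have Ha : cset (cpl a) a.
  move=> b Hb; have [H1 H2] := Hb a erefl; by rewrite joinC meetC.
split; [split => // x; split|split; [|split]].
- move=> Hx b ->; exact: Hx _ Ha.
- move=> Hx y Hy; have [H1 H2] := Hy x Hx; by rewrite joinC meetC.
- split.
  + move=> Hanti [f [Hinj [Hj [Hm [[x0 Hx0] [x1 Hx1]]]]]].
    have F0 : f N0 = \bot.
      by rewrite -Hx0 -[f N0](_ : f (n5_meet N0 x0) = _) // Hm Hx0 meetx0.
    have F1 : f N1 = \top.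
      have -> : f N1 = f (n5_join N1 x1) by case: x1 {Hx1}.
      by rewrite Hj Hx1 joinx1.
    have Hb : forall z, z = Na \/ z = Nc -> cpl (f Nb) (f z).
      move=> z Hz w ->; case: Hz => ->; split;
        by rewrite -?Hj -?Hm /= ?F0 ?F1.
    have := Hanti _ _ _ (Hb Na (or_introl erefl)) (Hb Nc (or_intror erefl))
      (n5_hom_le f Hm).
    by move/Hinj.
  + move=> HN x y z Hy Hz Hyz; apply/eqP; apply/negP => /negP Hne; apply: HN.
    have [Jxy Mxy] := Hy x erefl; have [Jxz Mxz] := Hz x erefl.
    have Jyx : y `|` x = \top by rewrite joinC.
    have Myx : y `&` x = \bot by rewrite meetC.
    have Jzx : z `|` x = \top by rewrite joinC.
    have Mzx : z `&` x = \bot by rewrite meetC.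
    have Jyz : y `|` z = z by apply: join_r.
    have Jzy : z `|` y = z by rewrite joinC.
    have Myz : y `&` z = y by apply: meet_l.
    have Mzy : z `&` y = y by rewrite meetC.
    have Hyz' : y <> z by move=> E; move: Hne; rewrite E eqxx.
    have D1 : y <> \bot.
      move=> E; apply: Hyz'; move: Jxy Mxz; rewrite E joinx0 => ->.
      by rewrite meet1x.
    have D2 : z <> \top.
      move=> E; apply: Hyz'; move: Mxz Jxy; rewrite E meetx1 => ->.
      by rewrite join0x.
    have D3 : y <> \top.
      by move=> E; apply: D2; apply/le_anti; rewrite lex1 -E.
    have D4 : z <> \bot.
      by move=> E; apply: D1; apply/le_anti; rewrite le0x -E andbT.
    have D5 : x <> \bot by move=> E; apply: D3; rewrite -Jxy E join0x.
    have D6 : x <> \top by move=> E; apply: D1; rewrite -Mxy E meet1x.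
    have D7 : x <> y by move=> E; apply: H01; rewrite -Mxy -Jxy E meetxx joinxx.
    have D8 : x <> z by move=> E; apply: H01; rewrite -Mxz -Jxz E meetxx joinxx.
    exists (fun n => match n with N0 => \bot | Na => y | Nb => x
                             | Nc => z | N1 => \top end).
    split; [|split; [|split; [|split]]].
    * move=> u v; case: u; case: v => //= E;
        solve [ match goal with
                | H : ?a <> ?b, E : ?a = ?b |- _ => by case: (H E)
                | H : ?a <> ?b, E : ?b = ?a |- _ => by case: (H (esym E))
                end ].
    * move=> u v; case: u; case: v => /=; symmetry;
        by rewrite ?(join0x, joinx0, join1x, joinx1, joinxx, Jxy, Jyx, Jxz, Jzx, Jyz, Jzy).
    * move=> u v; case: u; case: v => /=; symmetry;
        by rewrite ?(meet0x, meetx0, meet1x, meetx1, meetxx, Mxy, Myx, Mxz, Mzx, Myz, Mzy).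
    * by exists N0.
    * by exists N1.
- move=> b c e Hb Hc' Hbe Hec w Hw; have [H1 _] := Hb w Hw;
    have [_ H2] := Hc' w Hw; split.
  + apply/le_anti; rewrite lex1 /= -H1; exact: leU2 (lexx _) Hbe.
  + apply/le_anti; rewrite le0x andbT -H2; exact: leI2 (lexx _) Hec.
- move=> [x [y [Hxy Heq]]] Hall; apply: Hxy.
  apply/(Hall y x)/(Heq x) => b Hb; have [H1 H2] := Hb x erefl.
  by rewrite joinC meetC.
Qed.
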